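(* Let $d>0$, $n\in\mathbb{N}$, and let $\phi_\nu, W_\nu$, $\nu=1,\ldots,n$, be continuous complex-valued functions on $[0,d]$ such that $W_n(0)=1$ and, for every $d_1$ with $0<d_1\le d$, the system $\{\phi_\nu\}_{\nu=1}^n$ is linearly independent on $[0,d_1]$. Then the operator $R$ in $L_2[0,d]$ given by $$(Rg)(x)=\sum_{\nu=1}^n\phi_\nu(x)\int_0^x W_\nu(\xi)g(\xi)\,d\xi$$ is infinite-dimensional, i.e. its range is not a finite-dimensional linear subspace. *)

(* Defs.v *)
From HB Require Import structures.
From mathcomp Require Import all_boot all_order all_algebra.
From mathcomp Require Import all_classical all_reals.
From mathcomp Require Import topology normedtype sequences measure
  lebesgue_measure lebesgue_integral.
From mathcomp Require Import complex.

Set Implicit Arguments.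
Unset Strict Implicit.
Unset Printing Implicit Defensive.

Import Order.TTheory GRing.Theory Num.Theory.
Local Open Scope classical_set_scope.
Local Open Scope ring_scope.

Definition ccont_on (R : realType) (a b : R) (f : R -> R[i]) : Prop :=
  forall x, a <= x <= b -> forall e : R, 0 < e ->
    exists2 delta : R, 0 < delta &
      forall y, a <= y <= b -> `|y - x| < delta ->
        `|f y - f x| < e%:C%C.

Definition lin_indep_on (R : realType) (n : nat) (a b : R)
    (f : 'I_n -> R -> R[i]) : Prop :=
  forall c : 'I_n -> R[i],
    (forall x, a <= x <= b -> \sum_(nu < n) c nu * f nu x = 0) ->
    forall nu, c nu = 0.

Definition L2_on (R : realType) (d : R) (g : R -> R[i]) : Prop :=
  measurable_fun `[0, d] (fun x => complex.Re (g x)) /\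
  measurable_fun `[0, d] (fun x => complex.Im (g x)) /\
  (\int[lebesgue_measure]_(x in `[0%R, d]%classic)
      ((complex.Re (g x)) ^+ 2 + (complex.Im (g x)) ^+ 2)%:E < +oo)%E.

Definition cint0 (R : realType) (x : R) (f : R -> R[i]) : R[i] :=
  ((Rintegral lebesgue_measure `[0, x] (fun t => complex.Re (f t)))%:C
   + 'i * (Rintegral lebesgue_measure `[0, x] (fun t => complex.Im (f t)))%:C)%C.

Definition Rop (R : realType) (n : nat) (phi W : 'I_n -> R -> R[i])
    (g : R -> R[i]) (x : R) : R[i] :=
  \sum_(nu < n) phi nu x * cint0 x (fun xi => W nu xi * g xi).

Definition finite_dim_range (R : realType) (d : R)
    (T : (R -> R[i]) -> R -> R[i]) : Prop :=
  exists (m : nat) (h : 'I_m -> R -> R[i]),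
    forall g, L2_on d g ->
      exists c : 'I_m -> R[i],
        {ae (@lebesgue_measure R), forall x, `[0%R, d]%classic x ->
           T g x = \sum_(i < m) c i * h i x}.

(* Main.v *)
Require Import Defs.
From HB Require Import structures.
From mathcomp Require Import all_boot all_order all_algebra.
From mathcomp Require Import all_classical all_reals.
From mathcomp Require Import topology normedtype sequences measure
  lebesgue_measure lebesgue_integral.
From mathcomp Require Import complex.
From mathcomp Require Import measurable_realfun numfun.
From mathcomp Require Import ring lra zify.
Import Order.TTheory GRing.Theory Num.Theory.
Local Open Scope ring_scope.

Section S.
Import numFieldNormedType.Exports.
Local Open Scope classical_set_scope.
Variable R : realType.
Implicit Types (f g : R -> R[i]) (a b : R).

Lemma ccont_sub a b a' b' f : a <= a' -> b' <= b -> ccont_on a b f -> ccont_on a' b' f.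
Proof.
move=> ha hb hf x /andP[x1 x2] e e0.
have hx : a <= x <= b by rewrite (le_trans ha x1) (le_trans x2 hb).
have [dl dl0 H] := hf x hx e e0; exists dl => // y /andP[y1 y2] hy.
by apply: H => //; rewrite (le_trans ha y1) (le_trans y2 hb).
Qed.

Lemma ccont_add a b f g : ccont_on a b f -> ccont_on a b g ->
  ccont_on a b (fun x => f x + g x).
Proof.
move=> hf hg x hx e e0.
have e20 : 0 < e / 2 by rewrite divr_gt0.
have [d1 d10 H1] := hf x hx _ e20.
have [d2 d20 H2] := hg x hx _ e20.
exists (Order.min d1 d2); first by rewrite lt_min d10 d20.
move=> y hy hxy.
rewrite lt_min in hxy; case/andP: hxy => hy1 hy2.
rewrite (_ : f y + g y - (f x + g x) = (f y - f x) + (g y - g x)); last by ring.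
apply: (le_lt_trans (ler_normD _ _)).
rewrite (_ : e%:C%C = (e/2)%:C%C + (e/2)%:C%C); last first.
  by rewrite -rmorphD /= -splitr.
by rewrite ltrD // ?H1 ?H2.
Qed.

Lemma ccont_scale a b f (c : R[i]) : ccont_on a b f -> ccont_on a b (fun x => c * f x).
Proof.
move=> hf x hx e e0.
set k := Num.sqrt ((complex.Re c)^+2 + (complex.Im c)^+2).
have k0 : 0 <= k by rewrite sqrtr_ge0.
have ek : 0 < e / (k + 1) by rewrite divr_gt0 // ltr_wpDl.
have [dl dl0 H] := hf x hx _ ek.
exists dl => // y hy hxy.
rewrite -mulrBr normrM normc_def -/k.
apply: (le_lt_trans (y := (k + 1)%:C%C * `|f y - f x|)).
  by rewrite ler_wpM2r // lecR lerDl.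
rewrite (_ : e%:C%C = (k+1)%:C%C * (e / (k+1))%:C%C); last first.
  by rewrite -rmorphM /= mulrC divfK // gt_eqF // ltr_wpDl.
by rewrite ltr_pM2l ?H // ltcR ltr_wpDl.
Qed.


Lemma ccont_cst a b (c : R[i]) : ccont_on a b (fun _ => c).
Proof. by move=> x hx e e0; exists 1 => // y _ _; rewrite subrr normr0 ltcR. Qed.

Lemma ccont_lin a b n (c : 'I_n -> R[i]) (F : 'I_n -> R -> R[i]) :
  (forall nu, ccont_on a b (F nu)) ->
  ccont_on a b (fun x => \sum_(nu < n) c nu * F nu x).
Proof.
move=> hF.
suff H : forall s : seq 'I_n, ccont_on a b (fun x => \sum_(nu <- s) c nu * F nu x).
  exact: H.
elim=> [|nu s IH].
  by under [X in ccont_on _ _ X]funext => x do rewrite big_nil; exact: ccont_cst.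
under [X in ccont_on _ _ X]funext => x do rewrite big_cons.
by apply: ccont_add => //; exact: ccont_scale.
Qed.

Lemma ccont_Re_within a b f : ccont_on a b f ->
  {within `[a, b], continuous (fun x => complex.Re (f x))}.
Proof.
move=> hf; apply/subspace_continuousP => x /= hx.
apply/cvgrPdist_lt => e e0.
have hx' : a <= x <= b by move: hx; rewrite /= in_itv.
have [dl dl0 H] := hf x hx' e e0.
rewrite near_withinE; near=> y => hy.
have hy' : a <= y <= b by move: hy; rewrite /= in_itv.
have : `|y - x| < dl.
  near: y; exists dl => // y /= hy.
  by rewrite distrC.
move=> /(H y hy') h.
rewrite -ltcR; apply: le_lt_trans h.
apply: le_trans (normc_ge_Re (f y - f x)).
rewrite /from_subspace; case: (f y) => ? ?; case: (f x) => ? ? /=; by rewrite lecR distrC.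
Unshelve. all: end_near.
Qed.

Lemma ccont_Im_within a b f : ccont_on a b f ->
  {within `[a, b], continuous (fun x => complex.Im (f x))}.
Proof.
move=> hf.
have hg : ccont_on a b (fun x => (- 'i%C) * f x) by exact: ccont_scale.
have E : (fun x => complex.Im (f x)) = (fun x => complex.Re (- 'i%C * f x)).
  by apply: funext => x; case: (f x) => u v /=; ring.
by rewrite E; exact: (@ccont_Re_within a b _ hg).
Qed.

Notation mu := (@lebesgue_measure R).

Lemma ccont_Re_int a b f D : ccont_on a b f -> measurable D -> D `<=` `[a, b] ->
  mu.-integrable D (EFin \o (fun x => complex.Re (f x))).
Proof.
move=> hf mD sD.
apply: (@integrableS _ _ _ mu `[a, b] D) => //.
exact: (@continuous_compact_integrable R (fun x => complex.Re (f x)) `[a, b] (@segment_compact R a b) (@ccont_Re_within a b f hf)).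
Qed.

Lemma ccont_Im_int a b f D : ccont_on a b f -> measurable D -> D `<=` `[a, b] ->
  mu.-integrable D (EFin \o (fun x => complex.Im (f x))).
Proof.
move=> hf mD sD.
apply: (@integrableS _ _ _ mu `[a, b] D) => //.
exact: (@continuous_compact_integrable R (fun x => complex.Im (f x)) `[a, b] (@segment_compact R a b) (@ccont_Im_within a b f hf)).
Qed.

Definition Jint f (p q : R) : R[i] :=
  ((\int[mu]_(t in `]p, q]) complex.Re (f t))%:C
   + 'i * (\int[mu]_(t in `]p, q]) complex.Im (f t))%:C)%C.

Definition gind (p q : R) : R -> R[i] := fun t => if t \in `]p, q]%R then 1 else 0.

Lemma Re_mul_gind f p q t :
  complex.Re (f t * gind p q t) = ((fun t => complex.Re (f t)) \_ `]p, q]) t.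
Proof.
rewrite /gind /patch; rewrite mem_setE.
by case: ifP => _; case: (f t) => u v /=; rewrite ?mulr1 ?mulr0 ?subr0.
Qed.

Lemma Im_mul_gind f p q t :
  complex.Im (f t * gind p q t) = ((fun t => complex.Im (f t)) \_ `]p, q]) t.
Proof.
rewrite /gind /patch; rewrite mem_setE.
by case: ifP => _; case: (f t) => u v /=; rewrite ?mulr1 ?mulr0 ?add0r ?addr0.
Qed.

Lemma int_gind_zero (h : R -> R) p q x : x <= p ->
  \int[mu]_(t in `[0, x]) ((h \_ `]p, q]) t) = 0.
Proof.
move=> xp; rewrite -Rintegral_mkcondr.
rewrite (_ : `[0, x] `&` `]p, q] = set0); first by rewrite Rintegral_set0.
apply/seteqP; split => t //= []; rewrite /= !in_itv /= => /andP[_ tx] /andP[pt _].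
by move: (lt_le_trans pt (le_trans tx xp)); rewrite ltxx.
Qed.

Lemma cint0_gind_left f p q x : x <= p -> cint0 x (fun t => f t * gind p q t) = 0.
Proof.
move=> xp; rewrite /cint0.
under eq_Rintegral do rewrite Re_mul_gind.
rewrite int_gind_zero //.
under eq_Rintegral do rewrite Im_mul_gind.
by rewrite int_gind_zero // mulr0 addr0.
Qed.

Lemma int_gind_right (h : R -> R) p q x : 0 <= p -> q <= x ->
  \int[mu]_(t in `[0, x]) ((h \_ `]p, q]) t) = \int[mu]_(t in `]p, q]) h t.
Proof.
move=> p0 qx; rewrite -Rintegral_mkcondr.
congr Rintegral.
apply/seteqP; split => t /=; first by case.
move=> H; split => //; move: H; rewrite !in_itv /= => /andP[pt tq].
apply/andP; split.
- exact: le_trans p0 (ltW pt).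
- exact: le_trans tq qx.
Qed.

Lemma cint0_gind_right f p q x : 0 <= p -> q <= x ->
  cint0 x (fun t => f t * gind p q t) = Jint f p q.
Proof.
move=> p0 qx; rewrite /cint0.
under eq_Rintegral do rewrite Re_mul_gind.
rewrite int_gind_right //.
under [X in (_ + _ * real_complex _ X)%R]eq_Rintegral do rewrite Im_mul_gind.
by rewrite int_gind_right.
Qed.

Lemma normC_real (x : R) : `|x%:C%C| = `|x|%:C%C.
Proof. by rewrite normc_def /= expr0n addr0 sqrtr_sqr. Qed.

Lemma norm_i : `|'i%C : R[i]| = 1.
Proof. by rewrite normc_def /= expr0n add0r expr1n sqrtr1. Qed.

Lemma int_bound (h : R -> R) (p q e : R) : p < q ->
  mu.-integrable `]p, q] (EFin \o h) ->
  (forall t, p < t <= q -> `|h t| <= e) ->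
  `|\int[mu]_(t in `]p, q]) h t| <= e * (q - p).
Proof.
move=> pq ih hb.
have me : fine (mu `]p, q]) = q - p.
  by rewrite lebesgue_measure_itv /= lte_fin pq.
have ic : forall c : R, mu.-integrable `]p, q] (EFin \o (fun _ => c)).
  move=> c.
  have := @ccont_Re_int p q (fun _ => c%:C%C) `]p, q] (@ccont_cst p q c%:C%C).
  by apply => //; apply: subset_itvr; rewrite bnd_simp.
rewrite ler_norml; apply/andP; split.
  rewrite -mulNr -me -Rintegral_cst //.
  apply: le_Rintegral => // t; rewrite /= in_itv /= => ht.
  by have := hb t ht; rewrite ler_norml => /andP[].
rewrite -me -Rintegral_cst //.
apply: le_Rintegral => // t; rewrite /= in_itv /= => ht.
by have := hb t ht; rewrite ler_norml => /andP[].
Qed.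

Lemma normc_ge_Im (x : R[i]) : `|complex.Im x|%:C%C <= `|x|.
Proof.
have -> : complex.Im x = complex.Re (- 'i%C * x) by case: x => u v /=; ring.
apply: le_trans (normc_ge_Re _) _.
by rewrite normrM normrN norm_i mul1r.
Qed.

Lemma Re_bound (z : R[i]) e : `|z| < e%:C%C -> `|complex.Re z| <= e.
Proof. by move=> h; rewrite -lecR; apply: ltW; apply: le_lt_trans (normc_ge_Re _) h. Qed.

Lemma Im_bound (z : R[i]) e : `|z| < e%:C%C -> `|complex.Im z| <= e.
Proof. by move=> h; rewrite -lecR; apply: ltW; apply: le_lt_trans (normc_ge_Im _) h. Qed.

Lemma Jint_approx f (d : R) : 0 < d -> ccont_on 0 d f -> forall e, 0 < e ->
  exists2 dl, 0 < dl & forall p q, 0 <= p -> p < q -> q <= dl ->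
   `|Jint f p q - (q - p)%:C%C * f 0| <= (2 * e * (q - p))%:C%C.
Proof.
move=> d0 hf e e0.
have h0 : ((0:R) <= 0 <= d)%R by apply/andP; split => //; exact: ltW.
have [dl dl0 H] := hf 0 h0 e e0.
exists (Order.min (dl / 2) d); first by rewrite lt_min d0 divr_gt0.
move=> p q p0 pq; rewrite le_min => /andP[qdl qd].
have sub : `]p, q] `<=` `[0, d].
  move=> t; rewrite /= !in_itv /= => /andP[pt tq].
  by rewrite (le_trans p0 (ltW pt)) (le_trans tq qd).
have mI : measurable (`]p, q] : set R) by exact: measurable_itv.
have bnd : forall t, p < t <= q -> `|f t - f 0| < e%:C%C.
  move=> t /andP[pt tq]; apply: H.
    by rewrite (le_trans p0 (ltW pt)) (le_trans tq qd).
  rewrite subr0 ger0_norm; last exact: le_trans p0 (ltW pt).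
  apply: le_lt_trans tq _; apply: le_lt_trans qdl _.
  by rewrite ltr_pdivrMr // ltr_pMr // ltr1n.
have me : fine (mu `]p, q]) = q - p.
  by rewrite lebesgue_measure_itv /= lte_fin pq.
have ic : forall c : R, mu.-integrable `]p, q] (EFin \o (fun _ => c)).
  move=> c.
  have := @ccont_Re_int p q (fun _ => c%:C%C) `]p, q] (@ccont_cst p q c%:C%C).
  by apply => //; apply: subset_itvr; rewrite bnd_simp.
have iRe := @ccont_Re_int 0 d f _ hf mI sub.
have iIm := @ccont_Im_int 0 d f _ hf mI sub.
set A := \int[mu]_(t in `]p, q]) complex.Re (f t) - (q - p) * complex.Re (f 0).
set B := \int[mu]_(t in `]p, q]) complex.Im (f t) - (q - p) * complex.Im (f 0).
have eA : A = \int[mu]_(t in `]p, q]) (complex.Re (f t) - complex.Re (f 0)).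
  by rewrite RintegralB // Rintegral_cst // me mulrC.
have eB : B = \int[mu]_(t in `]p, q]) (complex.Im (f t) - complex.Im (f 0)).
  by rewrite RintegralB // Rintegral_cst // me mulrC.
have hg : ccont_on 0 d (fun t => f t + - f 0).
  by apply: ccont_add => //; exact: ccont_cst.
have iReg : mu.-integrable `]p, q] (EFin \o (fun t => complex.Re (f t) - complex.Re (f 0))).
  have E : (fun t => complex.Re (f t) - complex.Re (f 0)) = (fun t => complex.Re (f t + - f 0)).
    by apply: funext => t; case: (f t) => ? ?; case: (f 0) => ? ?.
  by rewrite E; exact: (@ccont_Re_int 0 d _ _ hg mI sub).
have iImg : mu.-integrable `]p, q] (EFin \o (fun t => complex.Im (f t) - complex.Im (f 0))).
  have E : (fun t => complex.Im (f t) - complex.Im (f 0)) = (fun t => complex.Im (f t + - f 0)).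
    by apply: funext => t; case: (f t) => ? ?; case: (f 0) => ? ?.
  by rewrite E; exact: (@ccont_Im_int 0 d _ _ hg mI sub).
have bA : `|A| <= e * (q - p).
  rewrite eA; apply: int_bound => //.
  move=> t ht; have := @Re_bound _ _ (bnd t ht).
  by case: (f t) => ? ?; case: (f 0) => ? ?.
have bB : `|B| <= e * (q - p).
  rewrite eB; apply: int_bound => //.
  move=> t ht; have := @Im_bound _ _ (bnd t ht).
  by case: (f t) => ? ?; case: (f 0) => ? ?.
have -> : Jint f p q - (q - p)%:C%C * f 0 = (A%:C + 'i * B%:C)%C.
  rewrite /Jint /A /B {1}(complexE (f 0)) !rmorphB !rmorphM /=.
  rewrite complexiE !rmorphB /=; ring.
apply: le_trans (ler_normD _ _) _.
rewrite normrM norm_i mul1r !normC_real -rmorphD /= lecR.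
by rewrite -mulrA mulr2n mulrDl mul1r lerD.
Qed.

Lemma norm_pos_real (z : R[i]) : z != 0 ->
  exists2 e : R, 0 < e & `|z| = e%:C%C.
Proof.
move=> z0; exists (Num.sqrt (complex.Re z ^+ 2 + complex.Im z ^+ 2)); last exact: normc_def.
by rewrite -ltcR -normc_def normr_gt0.
Qed.

Lemma ae_zero_cont a b f : a < b -> ccont_on a b f ->
  {ae mu, forall x, `[a, b] x -> f x = 0} -> forall x, a <= x <= b -> f x = 0.
Proof.
move=> ab hf hae x hx; apply/eqP; apply: contraT => fx0.
have [e e0 he] := @norm_pos_real _ fx0.
have [dl dl0 H] := hf x hx e e0.
have [N [mN N0 sN]] := hae.
set l := Order.max a (x - dl); set r := Order.min b (x + dl).
case/andP: hx => ax xb.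
have lr : l < r.
  by rewrite /l /r lt_min !gt_max; apply/andP; split; apply/andP; split; lra.
have sJ : (`]l, r[ : set R) `<=` N.
  move=> y; rewrite /= in_itv /= => /andP[ly yr]; apply: sN => /= Hy.
  move: ly yr; rewrite /l /r gt_max lt_min => /andP[ay xy] /andP[yb yx].
  have hy : a <= y <= b by rewrite (ltW ay) (ltW yb).
  have := H y hy.
  have -> : `|y - x| < dl.
    by rewrite ltr_norml; apply/andP; split; lra.
  move=> /(_ isT); rewrite Hy ?inE //= ?in_itv /= ?hy // sub0r normrN he ltxx //.
have : (mu `]l, r[ <= mu N)%E.
  apply: (@le_measure _ _ _ mu `]l, r[ N) => //; rewrite inE //; exact: measurable_itv.
by rewrite N0 lebesgue_measure_itv /= lte_fin lr /= -EFinD lee_fin leNgt subr_gt0 lr.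
Qed.

Lemma Rop_gind_left n (phi W : 'I_n -> R -> R[i]) p q x : x <= p ->
  Rop phi W (gind p q) x = 0.
Proof. by move=> xp; rewrite /Rop; apply: big1 => nu _; rewrite cint0_gind_left // mulr0. Qed.

Lemma Rop_gind_right n (phi W : 'I_n -> R -> R[i]) p q x : 0 <= p -> q <= x ->
  Rop phi W (gind p q) x = \sum_(nu < n) phi nu x * Jint (W nu) p q.
Proof. by move=> p0 qx; rewrite /Rop; apply: eq_bigr => nu _; rewrite cint0_gind_right. Qed.

Lemma Re_gind p q : (fun x => complex.Re (gind p q x)) = \1_(`]p, q] : set R).
Proof. by apply: funext => x; rewrite /gind indicE mem_setE; case: ifP. Qed.

Lemma Im_gind p q : (fun x => complex.Im (gind p q x)) = (fun _ => 0 : R).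
Proof. by apply: funext => x; rewrite /gind; case: ifP. Qed.

Lemma L2_gind (d p q : R) : L2_on d (gind p q).
Proof.
rewrite /L2_on Re_gind Im_gind; split; first exact: measurable_indic.
split; first exact: measurable_cst.
have -> : (fun x => (complex.Re (gind p q x) ^+ 2 + complex.Im (gind p q x) ^+ 2)%:E) =
          (fun x => (\1_(`]p, q] : set R) x)%:E).
  apply: funext => x; rewrite /gind indicE mem_setE; case: ifP => _ /=.
    by rewrite expr1n expr0n addr0.
  by rewrite !expr0n addr0.
rewrite integral_indic //.
apply: (le_lt_trans (y := mu `]p, q])).
  apply: (@le_measure _ _ _ mu (`]p, q] `&` `[0, d]) `]p, q]); rewrite ?inE.
  - by apply: measurableI; exact: measurable_itv.
  - exact: measurable_itv.
  - by move=> t [].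
rewrite lebesgue_measure_itv; case: ifP => _ //=; exact: ltry.
Qed.

Lemma aeS (P Q : R -> Prop) : (forall x, P x -> Q x) ->
  {ae mu, forall x, P x} -> {ae mu, forall x, Q x}.
Proof.
move=> PQ [N [mN N0 sN]]; exists N; split => // x /= nQ; apply: sN => /= Px.
by apply: nQ; apply: PQ.
Qed.

Lemma finite_min n (P : 'I_n -> R -> Prop) :
  (forall nu, exists2 dl, 0 < dl & P nu dl) ->
  (forall nu dl dl', 0 < dl' -> dl' <= dl -> P nu dl -> P nu dl') ->
  exists2 dl, 0 < dl & forall nu, P nu dl.
Proof.
move=> hP mono.
suff H : forall s : seq 'I_n, exists2 dl, 0 < dl & forall nu, nu \in s -> P nu dl.
  by have [dl dl0 H'] := H (enum 'I_n); exists dl => // nu; apply: H'; rewrite mem_enum.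
elim=> [|nu s [dl dl0 IH]]; first by exists 1.
have [dl1 dl10 H1] := hP nu.
exists (Order.min dl dl1); first by rewrite lt_min dl0 dl10.
move=> mu'; rewrite in_cons => /orP[/eqP ->|ms].
  by apply: (mono _ dl1) => //; [rewrite lt_min dl0 dl10 | rewrite ge_min lexx orbT].
by apply: (mono _ dl) => //; [rewrite lt_min dl0 dl10 | rewrite ge_min lexx | exact: IH].
Qed.

Lemma step1 d n (phi W : 'I_n -> R -> R[i]) :
  (forall nu, ccont_on 0 d (phi nu)) ->
  forall p q u, 0 < p -> p < q -> q < u -> u <= d ->
  {ae mu, forall x, `]p, u] x -> Rop phi W (gind p q) x = 0} ->
  forall x, q <= x <= u -> \sum_(nu < n) Jint (W nu) p q * phi nu x = 0.
Proof.
move=> hphi p q u p0 pq qu ud hae.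
apply: ae_zero_cont => //.
  apply: ccont_lin => nu; apply: ccont_sub (hphi nu) => //.
  by apply: ltW; apply: lt_trans pq.
apply: aeS hae => x H; rewrite /= in_itv /= => /andP[qx xu].
have -> : \sum_(nu < n) Jint (W nu) p q * phi nu x = Rop phi W (gind p q) x.
  rewrite Rop_gind_right //; last exact: ltW.
  by apply: eq_bigr => nu _; rewrite mulrC.
by apply: H; rewrite /= in_itv /= xu (lt_le_trans pq qx).
Qed.

Lemma step2 d n (phi W : 'I_n -> R -> R[i]) : 0 < d ->
  (forall nu, ccont_on 0 d (W nu)) ->
  forall u, u <= d ->
  (forall p q, 0 < p -> p < q -> q < u -> forall y, q <= y <= u ->
     \sum_(nu < n) Jint (W nu) p q * phi nu y = 0) ->
  forall x, 0 < x < u -> \sum_(nu < n) W nu 0 * phi nu x = 0.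
Proof.
move=> d0 hW u ud H x /andP[x0 xu].
apply/eqP; apply: contraT => Sx0.
have [s s0 hs] := @norm_pos_real _ Sx0.
pose m nu := Num.sqrt (complex.Re (phi nu x) ^+ 2 + complex.Im (phi nu x) ^+ 2).
have hm : forall nu, `|phi nu x| = (m nu)%:C%C by move=> nu; exact: normc_def.
pose M := \sum_(nu < n) m nu.
have M0 : 0 <= M by apply: sumr_ge0 => nu _; exact: sqrtr_ge0.
pose e := s / (2 * (M + 1)).
have e0 : 0 < e by rewrite divr_gt0 // mulr_gt0 // ltr_wpDl.
have [dl dl0 hdl] := @finite_min n (fun nu dl => forall p q, 0 <= p -> p < q -> q <= dl ->
   `|Jint (W nu) p q - (q - p)%:C%C * W nu 0| <= (2 * e * (q - p))%:C%C)
   (fun nu => @Jint_approx (W nu) d d0 (hW nu) e e0)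
   (fun nu dl dl' _ le h p q p0 pq qdl' => h p q p0 pq (le_trans qdl' le)).
pose q := Order.min dl x; pose p := q / 2.
have q0 : 0 < q by rewrite lt_min dl0 x0.
have p0 : 0 < p by rewrite divr_gt0.
have pq : p < q by rewrite /p ltr_pdivrMr // ltr_pMr // ltr1n.
have qx : q <= x by rewrite ge_min lexx orbT.
have qu : q < u by apply: le_lt_trans xu.
have Hx := H p q p0 pq qu x; rewrite qx (ltW xu) in Hx; have {}Hx := Hx isT.
have key : (q - p)%:C%C * \sum_(nu < n) W nu 0 * phi nu x =
    \sum_(nu < n) ((q - p)%:C%C * W nu 0 - Jint (W nu) p q) * phi nu x.
  rewrite [RHS](eq_bigr (fun nu => (q - p)%:C%C * (W nu 0 * phi nu x) - Jint (W nu) p q * phi nu x)).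
    by rewrite sumrB Hx subr0 mulr_sumr.
  by move=> nu _; rewrite mulrBl mulrA.
have : `|(q - p)%:C%C * \sum_(nu < n) W nu 0 * phi nu x| <= (2 * e * (q - p) * M)%:C%C.
  rewrite key; apply: le_trans (ler_norm_sum _ _ _) _.
  rewrite /M rmorphM rmorph_sum /= mulr_sumr; apply: ler_sum => nu _.
  rewrite normrM hm rmorphM /=; apply: ler_wpM2r; first by rewrite lecR sqrtr_ge0.
  rewrite -rmorphM distrC; apply: hdl; [exact: ltW | exact: pq | rewrite ge_min lexx //].
rewrite normrM hs normC_real ger0_norm ?subr_ge0 ?(ltW pq) // -rmorphM lecR.
rewrite (_ : 2 * e * (q - p) * M = (q - p) * (2 * (e * M))); last by ring.
rewrite ler_pM2l ?subr_gt0 //.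
have : 2 * (e * M) < s.
  rewrite /e (_ : 2 * (s / (2 * (M + 1)) * M) = s * (M / (M + 1))); last first.
    by field; rewrite gt_eqF // ltr_wpDl.
  by rewrite gtr_pMr // ltr_pdivrMr ?ltr_wpDl // mul1r ltrDl.
by move=> h1 h2; have := lt_le_trans h1 h2; rewrite ltxx.
Qed.

Lemma key_step d n (phi W : 'I_n -> R -> R[i]) : 0 < d -> (0 < n)%N ->
  (forall nu, ccont_on 0 d (phi nu)) ->
  (forall nu, ccont_on 0 d (W nu)) ->
  (forall nu : 'I_n, (nu.+1 = n)%N -> W nu 0 = 1) ->
  (forall d1 : R, 0 < d1 <= d -> lin_indep_on 0 d1 phi) ->
  forall u, 0 < u <= d -> exists p q, [/\ 0 < p, p < q, q < u &
    ~ {ae mu, forall x, `]p, u] x -> Rop phi W (gind p q) x = 0}].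
Proof.
move=> d0 hn hphi hW hWn hind u /andP[u0 ud].
apply: contrapT => Hno.
have H : forall p q, 0 < p -> p < q -> q < u -> forall y, q <= y <= u ->
    \sum_(nu < n) Jint (W nu) p q * phi nu y = 0.
  move=> p q p0 pq qu; apply: (@step1 d n phi W hphi p q u p0 pq qu ud).
  by apply: contrapT => nae; apply: Hno; exists p, q; split.
have S0 := @step2 d n phi W d0 hW u ud H.
have Sz : \sum_(nu < n) W nu 0 * phi nu 0 = 0.
  apply/eqP; apply: contraT => S0n.
  have [s s0 hs] := @norm_pos_real _ S0n.
  have hc : ccont_on 0 d (fun x => \sum_(nu < n) W nu 0 * phi nu x).
    exact: ccont_lin.
  have h0 : ((0:R) <= 0 <= d)%R by apply/andP; split => //; exact: ltW.
  have [dl dl0 Hd] := hc 0 h0 s s0.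
  pose y := Order.min (dl / 2) (u / 2).
  have y0 : 0 < y by rewrite lt_min !divr_gt0.
  have yu : y < u.
    apply: (le_lt_trans (y := u / 2)); first by rewrite ge_min lexx orbT.
    by rewrite ltr_pdivrMr // ltr_pMr // ltr1n.
  have hy : (0 <= y <= d)%R by rewrite (ltW y0) (le_trans (ltW yu) ud).
  have ydl : `|y - 0| < dl.
    rewrite subr0 ger0_norm ?(ltW y0) //.
    apply: (le_lt_trans (y := dl / 2)); first by rewrite ge_min lexx.
    by rewrite ltr_pdivrMr // ltr_pMr // ltr1n.
  have := Hd y hy ydl.
  by rewrite S0 ?y0 ?yu // sub0r normrN hs ltxx.
have i0 : (n.-1 < n)%N by rewrite ltn_predL.
have hu2 : 0 < u / 2 <= d.
  by rewrite divr_gt0 //= (le_trans _ ud) // ler_pdivrMr // ler_pMr // ler1n.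
have hz : forall x, 0 <= x <= u / 2 -> \sum_(nu < n) W nu 0 * phi nu x = 0.
  move=> x /andP[x0 xu2]; move: x0; rewrite le_eqVlt => /orP[/eqP <-|x0] //.
  by apply: S0; rewrite x0 /= (le_lt_trans xu2) // ltr_pdivrMr // ltr_pMr // ltr1n.
have := hind (u / 2) hu2 (fun nu => W nu 0) hz (Ordinal i0).
by rewrite hWn /=; [move/eqP; rewrite oner_eq0 | exact: prednK].
Qed.

Lemma main (d : R) (n : nat) (phi W : 'I_n -> R -> R[i])
  (hd : 0 < d)
  (hphi : forall nu, ccont_on 0 d (phi nu))
  (hW : forall nu, ccont_on 0 d (W nu))
  (hn : (0 < n)%N)
  (hWn : forall nu : 'I_n, (nu.+1 = n)%N -> W nu 0 = 1)
  (hind : forall d1 : R, 0 < d1 <= d -> lin_indep_on 0 d1 phi) :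
  ~ finite_dim_range d (Rop phi W).
Proof.
move=> [m [h Hfd]].
have KS := @key_step d n phi W hd hn hphi hW hWn hind.
have : forall u, exists pq : R * R, (0 < u <= d) -> [/\ 0 < pq.1, pq.1 < pq.2, pq.2 < u &
    ~ {ae mu, forall x, `]pq.1, u] x -> Rop phi W (gind pq.1 pq.2) x = 0}].
  move=> u; case: (pselect (0 < u <= d)) => [/KS [p [q H]]|nu].
    by exists (p, q).
  by exists (0, 0).
case/choice => P HP.
pose s k := iter k (fun u => (P u).1) d.
pose qk k := (P (s k)).2.
have sS : forall k, s k.+1 = (P (s k)).1 by [].
have inv : forall k, 0 < s k <= d.
  elim=> [|k IH]; first by rewrite /= hd lexx.
  have [p0 pq qu _] := HP _ IH.
  rewrite sS p0 /=; case/andP: IH => _ sd.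
  exact: le_trans (ltW (lt_trans pq qu)) sd.
have sdec : forall k, s k.+1 < s k.
  by move=> k; have [_ pq qu _] := HP _ (inv k); rewrite sS; exact: lt_trans pq qu.
have santi : forall i j, (i <= j)%N -> s j <= s i.
  move=> i j /subnK <-; elim: (j - i)%N => [|t IH]; first by rewrite add0n.
  by rewrite addSn; apply: le_trans (ltW (sdec _)) IH.
pose f k := Rop phi W (gind (s k.+1) (qk k)).
have : forall k : 'I_m.+1, exists c : 'I_m -> R[i],
    {ae mu, forall x, `[0%R, d] x -> f k x = \sum_(i < m) c i * h i x}.
  by move=> k; apply: Hfd; exact: L2_gind.
case/choice => c Hc.
pose C : 'M[R[i]]_(m.+1, m) := \matrix_(k, i) c k i.
have kerNZ : kermx C != 0.
  rewrite kermx_eq0 /row_free; apply/negP => /eqP hr.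
  by have := rank_leq_col C; rewrite hr ltnn.
have [r0 Hr0] : exists r0, row r0 (kermx C) != 0.
  apply: contrapT => Hn; move: kerNZ; apply/negP; rewrite negbK.
  apply/eqP/row_matrixP => r; rewrite row0; apply/eqP; apply: contrapT => hh.
  by apply: Hn; exists r; apply/negP.
pose a := row r0 (kermx C).
have aC : forall i : 'I_m, \sum_(k < m.+1) a 0 k * c k i = 0.
  have e : a *m C = 0 by rewrite /a -row_mul mulmx_ker row0.
  move=> i; have := congr1 (fun M : 'M_(1, m) => M 0 i) e.
  rewrite /= mxE [in RHS]mxE => E; apply: etrans E.
  by apply: eq_bigr => k _; congr (_ * _); rewrite /C mxE.
have Hall : {ae mu, forall x, forall j, forall (Hj : (j < m.+1)%N),
    `[0%R, d] x -> f j x = \sum_(i < m) c (Ordinal Hj) i * h i x}.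
  apply: ae_foralln => j.
  case: (pselect (j < m.+1)%N) => Hj.
    by apply: aeS (Hc (Ordinal Hj)) => x H Hj' ; rewrite (bool_irrelevance Hj' Hj).
  by apply: aeW => x Hj'; exfalso; exact: Hj Hj'.
have Hcomb : {ae mu, forall x, `[0%R, d] x -> \sum_(k < m.+1) a 0 k * f k x = 0}.
  apply: aeS Hall => x H x0d.
  rewrite (eq_bigr (fun k : 'I_m.+1 => \sum_(i < m) a 0 k * c k i * h i x)); last first.
    move=> k _; rewrite (H k (ltn_ord k) x0d) mulr_sumr; apply: eq_bigr => i _.
    by rewrite mulrA; congr (_ * c _ _ * _); apply: val_inj.
  rewrite exchange_big /=; apply: big1 => i _.
  by rewrite -mulr_suml aC mul0r.
have step : forall k : 'I_m.+1, (forall j : 'I_m.+1, (k < j)%N -> a 0 j = 0) -> a 0 k = 0.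
  move=> k Hj; apply/eqP; apply: contraT => ak.
  have [_ _ _ NA] := HP _ (inv k); exfalso; apply: NA.
  apply: aeS Hcomb => x H xI.
  have x0d : `[0%R, d] x.
    move: xI; rewrite /= !in_itv /= => /andP[lx xu].
    case/andP: (inv k.+1) => l0 _; case/andP: (inv k) => _ sd.
    by rewrite (le_trans (ltW l0) (ltW lx)) (le_trans xu sd).
  have := H x0d; rewrite (bigD1 k) //= big1 ?addr0.
    by move/eqP; rewrite mulf_eq0 (negbTE ak) /= => /eqP.
  move=> j jk; case: (ltngtP j k) => [jlk|kj|/val_inj ejk]; last by rewrite ejk eqxx in jk.
    rewrite /f Rop_gind_left ?mulr0 //.
    move: xI; rewrite /= in_itv /= => /andP[_ xu]; apply: le_trans xu _.
    exact: (santi j.+1 k jlk).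
  by rewrite Hj // mul0r.
have az : forall (t : nat) (k : 'I_m.+1), (m - k <= t)%N -> a 0 k = 0.
  elim=> [|t' IH] k hk.
    apply: step => j kj; have := ltn_ord j; have := ltn_ord k.
    by move: hk kj; lia.
  apply: step => j kj; apply: IH; move: hk kj; have := ltn_ord j; lia.
apply: (negP Hr0); apply/eqP/rowP => k.
by rewrite [RHS]mxE; exact: (az m k (leq_subr _ _)).
Qed.

End S.

Theorem lemma2 (R : realType) (d : R) (n : nat) (phi W : 'I_n -> R -> R[i])
  (hd : 0 < d)
  (hphi : forall nu, ccont_on 0 d (phi nu))
  (hW : forall nu, ccont_on 0 d (W nu))
  (hn : (0 < n)%N)
  (hWn : forall nu : 'I_n, (nu.+1 = n)%N -> W nu 0 = 1)
  (hind : forall d1 : R, 0 < d1 <= d -> lin_indep_on 0 d1 phi) :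
  ~ finite_dim_range d (Rop phi W).
Proof. exact: (@main R d n phi W hd hphi hW hn hWn hind). Qed.
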